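(* Let $\alpha\in[0,\pi/2)$, $B,C,D\in M_n$, $A\in\Pi^n_{s,\alpha}$ and $q\in\mathbb{C}$ with $0<|q|\le1$. Then \[ |q|\,w_q(ACB\pm BDA)\le 2\sec(\alpha)\max\{\|C\|,\|D\|\}\,w_q(A)\,\|B\|. \]
   Context: $M_n$ is the algebra of complex $n\times n$ matrices with the operator norm $\|\cdot\|$. For $|q|\le1$, $w_q(A)=\sup\{|\langle Ax,y\rangle|: \|x\|=\|y\|=1,\ \langle x,y\rangle=q\}$. $W(A)=\{\langle Ax,x\rangle:\|x\|=1\}$, $S_\alpha=\{z:\operatorname{Re}z>0,\ |\operatorname{Im}z|\le\tan(\alpha)\operatorname{Re}z\}$ and $\Pi^n_{s,\alpha}=\{A\in M_n: W(A)\subseteq S_\alpha\}$. *)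

(* Defs.v *)
From HB Require Import structures.
From mathcomp Require Import all_boot all_order all_algebra.
From mathcomp Require Import all_classical all_reals.
From mathcomp Require Import trigo.
From mathcomp Require Import complex.
Set Implicit Arguments. Unset Strict Implicit. Unset Printing Implicit Defensive.
Import Order.TTheory GRing.Theory Num.Theory.
Local Open Scope ring_scope.
Local Open Scope classical_set_scope.

Section QNumRadius.
Variable R : realType.
Local Notation C := (R[i]).

Definition cmod (z : C) : R := Num.sqrt (complex.Re z ^+ 2 + complex.Im z ^+ 2).

Definition inner (n : nat) (x y : 'cV[C]_n) : C :=
  \sum_(i < n) x i 0 * (y i 0)^*%C.

Definition vnorm (n : nat) (x : 'cV[C]_n) : R := Num.sqrt (complex.Re (inner x x)).

Definition opnorm (n : nat) (A : 'M[C]_n) : R :=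
  sup [set vnorm (A *m x) | x in [set x : 'cV[C]_n | vnorm x = 1]].

Definition wq (n : nat) (q : C) (A : 'M[C]_n) : R :=
  sup [set r : R | exists x y : 'cV[C]_n,
         [/\ vnorm x = 1, vnorm y = 1, inner x y = q & r = cmod (inner (A *m x) y)]].

Definition numrange (n : nat) (A : 'M[C]_n) : set C :=
  [set inner (A *m x) x | x in [set x : 'cV[C]_n | vnorm x = 1]].

Definition sector (a : R) : set C :=
  [set z : C | 0 < complex.Re z /\ `|complex.Im z| <= tan a * complex.Re z].

Definition Pi_s (n : nat) (a : R) : set 'M[C]_n :=
  [set A | numrange A `<=` sector a].

End QNumRadius.

(* Main.v *)
Require Import Defs.
From HB Require Import structures.
From mathcomp Require Import all_boot all_order all_algebra.
From mathcomp Require Import all_classical all_reals.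
From mathcomp Require Import trigo.
From mathcomp Require Import complex.
From mathcomp Require Import ring lra.
Import Order.TTheory GRing.Theory Num.Theory.
Local Open Scope ring_scope.
Local Open Scope classical_set_scope.
Lemma sq_le {R : realType} (a b : R) : 0 <= b -> a ^+ 2 <= b ^+ 2 -> a <= b.
Proof. move=> *; nra. Qed.

Lemma cmod_norm {R : realType} (z : R[i]) : `|z| = ((cmod z)%:C)%C.
Proof. by rewrite normc_def. Qed.

Lemma cmod_ge0 {R : realType} (z : R[i]) : 0 <= cmod z.
Proof. exact: sqrtr_ge0. Qed.

Lemma cmodM {R : realType} (x y : R[i]) : cmod (x * y) = cmod x * cmod y.
Proof.
apply: (@complexI R); rewrite rmorphM /= -!cmod_norm; exact: normrM.
Qed.

Lemma cmodD {R : realType} (x y : R[i]) : cmod (x + y) <= cmod x + cmod y.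
Proof.
rewrite -(@lecR R) rmorphD /= -!cmod_norm; exact: ler_normD.
Qed.

Lemma cmodJ {R : realType} (x : R[i]) : cmod (x^*)%C = cmod x.
Proof. apply: (@complexI R); rewrite -!cmod_norm; exact: normcJ. Qed.

Lemma cmodN {R : realType} (x : R[i]) : cmod (- x) = cmod x.
Proof. apply: (@complexI R); rewrite -!cmod_norm; exact: normrN. Qed.

Lemma cmod_sq {R : realType} (z : R[i]) :
  cmod z ^+ 2 = complex.Re z ^+ 2 + complex.Im z ^+ 2.
Proof. by rewrite /cmod sqr_sqrtr // addr_ge0 ?sqr_ge0. Qed.

Lemma cmod_real {R : realType} (r : R) : cmod (r%:C)%C = `|r|.
Proof. by rewrite /cmod /= expr0n /= addr0 sqrtr_sqr. Qed.

Lemma Re_le_cmod {R : realType} (z : R[i]) : complex.Re z <= cmod z.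
Proof.
have h := cmod_sq z; have h0 := cmod_ge0 z.
apply: sq_le => //. have := sqr_ge0 (complex.Im z). nra.
Qed.

Lemma cmod_eq0 {R : realType} (z : R[i]) : cmod z = 0 -> z = 0.
Proof.
move=> h; have := cmod_sq z; rewrite h expr0n /= => e.
move: e; case: z {h} => a b /= e.
have ha : a ^+ 2 = 0 by have := sqr_ge0 a; have := sqr_ge0 b; nra.
have hb : b ^+ 2 = 0 by have := sqr_ge0 a; have := sqr_ge0 b; nra.
move/eqP: ha; rewrite sqrf_eq0 => /eqP ->.
by move/eqP: hb; rewrite sqrf_eq0 => /eqP ->.
Qed.

Lemma ReD {R : realType} (x y : R[i]) : complex.Re (x + y) = complex.Re x + complex.Re y.
Proof. by case: x; case: y. Qed.
Lemma ImD {R : realType} (x y : R[i]) : complex.Im (x + y) = complex.Im x + complex.Im y.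
Proof. by case: x; case: y. Qed.

Lemma Re_sum {R : realType} (I : finType) (F : I -> R[i]) :
  complex.Re (\sum_i F i) = \sum_i complex.Re (F i).
Proof. by apply: (big_morph _ (@ReD R)). Qed.
Lemma Im_sum {R : realType} (I : finType) (F : I -> R[i]) :
  complex.Im (\sum_i F i) = \sum_i complex.Im (F i).
Proof. by apply: (big_morph _ (@ImD R)). Qed.

Definition lin1 {R : realType} {n : nat} (f : 'cV[R[i]]_n -> 'cV[R[i]]_n -> R[i]) :=
  forall x y z c, f (x + c *: y) z = f x z + c * f y z.
Definition lin2 {R : realType} {n : nat} (f : 'cV[R[i]]_n -> 'cV[R[i]]_n -> R[i]) :=
  forall x y z c, f z (x + c *: y) = f z x + (c^*)%C * f z y.
Definition herm {R : realType} {n : nat} (f : 'cV[R[i]]_n -> 'cV[R[i]]_n -> R[i]) :=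
  forall x y, f y x = (f x y)^*%C.
Definition psd {R : realType} {n : nat} (f : 'cV[R[i]]_n -> 'cV[R[i]]_n -> R[i]) :=
  forall x, 0 <= complex.Re (f x x).

Lemma disc {R : realType} (a b N : R) : 0 <= a -> 0 <= b -> 0 <= N ->
  (forall l, 0 <= a - 2 * l * N + l ^+ 2 * N * b) -> N <= a * b.
Proof.
move=> a0 b0 N0 H.
have [bz|bp] := eqVneq b 0.
  rewrite bz mulr0.
  have [Nz|Np] := eqVneq N 0; first by rewrite Nz.
  have Np' : 0 < N by rewrite lt_def Np N0.
  have := H ((a + 1) / (2 * N)); rewrite bz mulr0 addr0.
  have -> : 2 * ((a + 1) / (2 * N)) * N = a + 1.
    by field.
  lra.
have bp' : 0 < b by rewrite lt_def bp b0.
have := H (b^-1).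
have -> : 2 * b^-1 * N = 2 * N / b by field.
have -> : b^-1 ^+ 2 * N * b = N / b by field.
move=> h.
have : 0 <= (a - 2 * N / b + N / b) * b by apply: mulr_ge0 => //; lra.
have -> : (a - 2 * N / b + N / b) * b = a * b - N by field.
lra.
Qed.

Lemma CS {R : realType} {n : nat} (f : 'cV[R[i]]_n -> 'cV[R[i]]_n -> R[i]) :
  lin1 f -> lin2 f -> herm f -> psd f ->
  forall x y, cmod (f x y) ^+ 2 <= complex.Re (f x x) * complex.Re (f y y).
Proof.
move=> l1 l2 hf pf x y.
rewrite cmod_sq.
apply: disc; rewrite ?pf ?addr_ge0 ?sqr_ge0 // => l.
have := pf (x + (- (l%:C)%C * f x y) *: y).
rewrite l1 !l2 (hf x y).
move: (f x y) (f x x) (f y y) => [c1 c2] [a a'] [b b'] /=.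
move=> h; apply: (le_trans h); rewrite le_eqVlt; apply/orP; left; apply/eqP.
ring.
Qed.

Lemma sq_eq {R : realType} (a b : R) : 0 <= a -> 0 <= b -> a ^+ 2 = b ^+ 2 -> a = b.
Proof. move=> *; apply/eqP; rewrite eq_le; apply/andP; split; nra. Qed.

Lemma inner_lin1 {R : realType} {n : nat} : lin1 (@inner R n).
Proof.
move=> x y z c; rewrite /inner mulr_sumr -big_split; apply: eq_bigr => i _.
by rewrite !mxE mulrDl mulrA.
Qed.

Lemma inner_lin2 {R : realType} {n : nat} : lin2 (@inner R n).
Proof.
move=> x y z c; rewrite /inner mulr_sumr -big_split; apply: eq_bigr => i _.
rewrite !mxE rmorphD rmorphM /=; ring.
Qed.

Lemma inner_herm {R : realType} {n : nat} : herm (@inner R n).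
Proof.
move=> x y; rewrite /inner rmorph_sum; apply: eq_bigr => i _.
by rewrite rmorphM /= conjcK mulrC.
Qed.

Lemma Re_inner {R : realType} {n : nat} (x : 'cV[R[i]]_n) :
  complex.Re (inner x x) = \sum_i cmod (x i 0) ^+ 2.
Proof.
rewrite /inner Re_sum; apply: eq_bigr => i _; rewrite cmod_sq.
by case: (x i 0) => a b /=; ring.
Qed.

Lemma Im_inner {R : realType} {n : nat} (x : 'cV[R[i]]_n) :
  complex.Im (inner x x) = 0.
Proof.
rewrite /inner Im_sum; apply: big1 => i _.
by case: (x i 0) => a b /=; ring.
Qed.

Lemma inner_psd {R : realType} {n : nat} : psd (@inner R n).
Proof. by move=> x; rewrite Re_inner; apply: sumr_ge0 => i _; rewrite sqr_ge0. Qed.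

Lemma vnorm_ge0 {R : realType} {n : nat} (x : 'cV[R[i]]_n) : 0 <= vnorm x.
Proof. exact: sqrtr_ge0. Qed.

Lemma vnorm_sq {R : realType} {n : nat} (x : 'cV[R[i]]_n) :
  vnorm x ^+ 2 = complex.Re (inner x x).
Proof. by rewrite /vnorm sqr_sqrtr // inner_psd. Qed.

Lemma Im0_real {R : realType} (z : R[i]) : complex.Im z = 0 -> z = ((complex.Re z)%:C)%C.
Proof. by case: z => a b /= ->. Qed.

Lemma inner_self {R : realType} {n : nat} (x : 'cV[R[i]]_n) :
  inner x x = ((vnorm x ^+ 2)%:C)%C.
Proof. by rewrite vnorm_sq -Im0_real // Im_inner. Qed.

Lemma vnorm_eq0 {R : realType} {n : nat} (x : 'cV[R[i]]_n) : vnorm x = 0 -> x = 0.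
Proof.
move=> h; have := vnorm_sq x; rewrite h expr0n /= Re_inner => /esym/eqP.
rewrite psumr_eq0 => [/allP H|i _]; last by rewrite sqr_ge0.
apply/matrixP => i j; rewrite (ord1 j) mxE; apply: cmod_eq0.
have := H i (mem_index_enum _); rewrite /= sqrf_eq0 => /eqP //.
Qed.

Lemma vnorm0 {R : realType} {n : nat} : vnorm (0 : 'cV[R[i]]_n) = 0.
Proof.
apply: sq_eq; rewrite ?vnorm_ge0 // vnorm_sq Re_inner expr0n /=.
by apply: big1 => i _; rewrite mxE /cmod /= expr0n /= addr0 sqrtr0 expr0n.
Qed.

Lemma vnormZ {R : realType} {n : nat} (c : R[i]) (x : 'cV[R[i]]_n) :
  vnorm (c *: x) = cmod c * vnorm x.
Proof.
apply: sq_eq; rewrite ?vnorm_ge0 ?mulr_ge0 ?cmod_ge0 ?vnorm_ge0 //.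
rewrite exprMn !vnorm_sq !Re_inner mulr_sumr; apply: eq_bigr => i _.
by rewrite mxE cmodM exprMn.
Qed.

Lemma vnormN {R : realType} {n : nat} (x : 'cV[R[i]]_n) : vnorm (- x) = vnorm x.
Proof.
rewrite -scaleN1r vnormZ cmodN.
have -> : cmod (1 : R[i]) = 1 by rewrite /cmod /= expr1n expr0n /= addr0 sqrtr1.
by rewrite mul1r.
Qed.

Lemma CS_inner {R : realType} {n : nat} (x y : 'cV[R[i]]_n) :
  cmod (inner x y) <= vnorm x * vnorm y.
Proof.
apply: sq_le; first by rewrite mulr_ge0 ?vnorm_ge0.
rewrite exprMn !vnorm_sq.
exact: (@CS R n (@inner R n) inner_lin1 inner_lin2 inner_herm inner_psd x y).
Qed.

Lemma vnormD {R : realType} {n : nat} (x y : 'cV[R[i]]_n) :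
  vnorm (x + y) <= vnorm x + vnorm y.
Proof.
apply: sq_le; first by rewrite addr_ge0 ?vnorm_ge0.
rewrite vnorm_sq.
have l1 := inner_lin1 x y (x + y) 1; have l2a := inner_lin2 x y x 1.
have l2b := inner_lin2 x y y 1; rewrite !scale1r in l1 l2a l2b.
rewrite l1 l2a l2b (inner_herm x y) conjc1 !mul1r !ReD.
have e1 := vnorm_sq x; have e2 := vnorm_sq y.
have := CS_inner x y; have := Re_le_cmod (inner x y).
have := vnorm_ge0 x; have := vnorm_ge0 y.
move: (inner x y) (inner x x) (inner y y) e1 e2 => [c1 c2] [a a'] [b b'] /=.
move=> e1 e2 *. nra.
Qed.

Lemma entry_inner {R : realType} {n : nat} (M : 'M[R[i]]_n) (x : 'cV[R[i]]_n) i :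
  (M *m x) i 0 = inner x (\col_j ((M i j)^*)%C).
Proof.
rewrite mxE /inner; apply: eq_bigr => j _; by rewrite mxE conjcK mulrC.
Qed.

Definition K2 {R : realType} {n : nat} (M : 'M[R[i]]_n) : R :=
  \sum_i vnorm (\col_j ((M i j)^*)%C) ^+ 2.

Lemma K2_ge0 {R : realType} {n : nat} (M : 'M[R[i]]_n) : 0 <= K2 M.
Proof. by apply: sumr_ge0 => i _; rewrite sqr_ge0. Qed.

Lemma mx_bound {R : realType} {n : nat} (M : 'M[R[i]]_n) (x : 'cV[R[i]]_n) :
  vnorm (M *m x) ^+ 2 <= K2 M * vnorm x ^+ 2.
Proof.
rewrite vnorm_sq Re_inner /K2 mulr_suml; apply: ler_sum => i _.
rewrite entry_inner.
have h := CS_inner x (\col_j ((M i j)^*)%C).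
have := cmod_ge0 (inner x (\col_j ((M i j)^*)%C)).
have := vnorm_ge0 x; have := vnorm_ge0 (\col_j ((M i j)^*)%C).
nra.
Qed.

Lemma unit_bound {R : realType} {n : nat} (M : 'M[R[i]]_n) (x : 'cV[R[i]]_n) :
  vnorm x = 1 -> vnorm (M *m x) <= 1 + K2 M.
Proof.
move=> h; have := mx_bound M x; rewrite h expr1n mulr1.
have := K2_ge0 M; have := vnorm_ge0 (M *m x); nra.
Qed.

Lemma sup_ge0' {R : realType} (E : set R) :
  has_ubound E -> (forall r, E r -> 0 <= r) -> 0 <= sup E.
Proof.
move=> hu h; case: (pselect (E !=set0)) => [[r Er]|ne].
  by apply: le_trans (h r Er) _; apply: ub_le_sup.
have -> : E = set0.
  by apply/seteqP; split => // r Er; exfalso; apply: ne; exists r.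
by rewrite sup0.
Qed.

Lemma sup_le' {R : realType} (E : set R) (b : R) :
  0 <= b -> (forall r, E r -> r <= b) -> sup E <= b.
Proof.
move=> b0 h; case: (pselect (E !=set0)) => [ne|ne].
  by apply: ge_sup.
have -> : E = set0.
  by apply/seteqP; split => // r Er; exfalso; apply: ne; exists r.
by rewrite sup0.
Qed.

Lemma opnorm_ub {R : realType} {n : nat} (M : 'M[R[i]]_n) (x : 'cV[R[i]]_n) :
  vnorm x = 1 -> vnorm (M *m x) <= opnorm M.
Proof.
move=> hx; apply: ub_le_sup; last by exists x.
by exists (1 + K2 M) => r [y hy <-]; apply: unit_bound.
Qed.

Lemma opnorm_ge0 {R : realType} {n : nat} (M : 'M[R[i]]_n) : 0 <= opnorm M.
Proof.
apply: sup_ge0'; last by move=> r [y hy <-]; apply: vnorm_ge0.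
by exists (1 + K2 M) => r [y hy <-]; apply: unit_bound.
Qed.

Lemma opnorm_le {R : realType} {n : nat} (M : 'M[R[i]]_n) (x : 'cV[R[i]]_n) :
  vnorm (M *m x) <= opnorm M * vnorm x.
Proof.
have [e|ne] := eqVneq (vnorm x) 0.
  by rewrite (vnorm_eq0 x e) mulmx0 !vnorm0 mulr0.
have vp : 0 < vnorm x by rewrite lt_def ne vnorm_ge0.
set v := (((vnorm x)^-1)%:C)%C *: x.
have hv : vnorm v = 1.
  by rewrite vnormZ cmod_real ger0_norm ?invr_ge0 ?vnorm_ge0 // mulVf.
have -> : M *m x = (((vnorm x)%:C)%C) *: (M *m v).
  rewrite scalemxAr /v scalerA -rmorphM /= divff // scale1r //.
rewrite vnormZ cmod_real ger0_norm ?vnorm_ge0 // mulrC.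
by apply: ler_wpM2r; [apply: vnorm_ge0 | apply: opnorm_ub].
Qed.

Lemma wq_ub {R : realType} {n : nat} (q : R[i]) (X : 'M[R[i]]_n) (x y : 'cV[R[i]]_n) :
  vnorm x = 1 -> vnorm y = 1 -> inner x y = q ->
  cmod (inner (X *m x) y) <= wq q X.
Proof.
move=> hx hy hq; apply: ub_le_sup; last by exists x, y; split.
exists (opnorm X) => r [x' [y' [hx' hy' _ ->]]].
apply: le_trans (CS_inner _ _) _; rewrite hy' mulr1; exact: opnorm_ub.
Qed.

Lemma wq_le {R : realType} {n : nat} (q : R[i]) (X : 'M[R[i]]_n) (b : R) :
  0 <= b ->
  (forall x y : 'cV[R[i]]_n, vnorm x = 1 -> vnorm y = 1 -> inner x y = q ->
     cmod (inner (X *m x) y) <= b) -> wq q X <= b.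
Proof.
move=> b0 h; apply: sup_le' => // r [x [y [hx hy hq ->]]]; exact: h.
Qed.

Lemma wq_ge0 {R : realType} {n : nat} (q : R[i]) (X : 'M[R[i]]_n) : 0 <= wq q X.
Proof.
apply: sup_ge0'; last by move=> r [x [y [_ _ _ ->]]]; apply: cmod_ge0.
exists (opnorm X) => r [x' [y' [hx' hy' _ ->]]].
apply: le_trans (CS_inner _ _) _; rewrite hy' mulr1; exact: opnorm_ub.
Qed.

Lemma cext {R : realType} (x y : R[i]) :
  complex.Re x = complex.Re y -> complex.Im x = complex.Im y -> x = y.
Proof. by case: x; case: y => a b c d /= -> ->. Qed.

Definition hf {R : realType} {n : nat} (f : 'cV[R[i]]_n -> 'cV[R[i]]_n -> R[i]) :=
  fun x y => f x y + (f y x)^*%C.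
Definition kf {R : realType} {n : nat} (f : 'cV[R[i]]_n -> 'cV[R[i]]_n -> R[i]) :=
  fun x y => (f x y - (f y x)^*%C) * (- 'i%C).
Definition lc {R : realType} {n : nat} (u v : R) (f g : 'cV[R[i]]_n -> 'cV[R[i]]_n -> R[i]) :=
  fun x y => (u%:C)%C * f x y + (v%:C)%C * g x y.

Lemma conji {R : realType} : ('i%C)^*%C = - 'i%C :> R[i].
Proof. by apply: cext => /=; rewrite ?oppr0. Qed.

Lemma hf_lin1 {R : realType} {n : nat} (f : 'cV[R[i]]_n -> 'cV[R[i]]_n -> R[i]) :
  lin1 f -> lin2 f -> lin1 (hf f).
Proof.
move=> l1 l2 x y z c; rewrite /hf l1 l2 rmorphD rmorphM /= conjcK; ring.
Qed.
Lemma hf_lin2 {R : realType} {n : nat} (f : 'cV[R[i]]_n -> 'cV[R[i]]_n -> R[i]) :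
  lin1 f -> lin2 f -> lin2 (hf f).
Proof.
move=> l1 l2 x y z c; rewrite /hf l1 l2 rmorphD rmorphM /=; ring.
Qed.
Lemma hf_herm {R : realType} {n : nat} (f : 'cV[R[i]]_n -> 'cV[R[i]]_n -> R[i]) :
  herm (hf f).
Proof. by move=> x y; rewrite /hf rmorphD /= conjcK addrC. Qed.

Lemma kf_lin1 {R : realType} {n : nat} (f : 'cV[R[i]]_n -> 'cV[R[i]]_n -> R[i]) :
  lin1 f -> lin2 f -> lin1 (kf f).
Proof.
move=> l1 l2 x y z c; rewrite /kf l1 l2 rmorphD rmorphM /= conjcK; ring.
Qed.
Lemma kf_lin2 {R : realType} {n : nat} (f : 'cV[R[i]]_n -> 'cV[R[i]]_n -> R[i]) :
  lin1 f -> lin2 f -> lin2 (kf f).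
Proof.
move=> l1 l2 x y z c; rewrite /kf l1 l2 rmorphD rmorphM /=; ring.
Qed.
Lemma kf_herm {R : realType} {n : nat} (f : 'cV[R[i]]_n -> 'cV[R[i]]_n -> R[i]) :
  herm (kf f).
Proof.
move=> x y; rewrite /kf; move: (f y x) (f x y) => [a b] [c d]; apply: cext => /=; ring.
Qed.

Lemma lc_lin1 {R : realType} {n : nat} u v (f g : 'cV[R[i]]_n -> 'cV[R[i]]_n -> R[i]) :
  lin1 f -> lin1 g -> lin1 (lc u v f g).
Proof. by move=> l1 l2 x y z c; rewrite /lc l1 l2; ring. Qed.
Lemma lc_lin2 {R : realType} {n : nat} u v (f g : 'cV[R[i]]_n -> 'cV[R[i]]_n -> R[i]) :
  lin2 f -> lin2 g -> lin2 (lc u v f g).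
Proof. by move=> l1 l2 x y z c; rewrite /lc l1 l2; ring. Qed.
Lemma lc_herm {R : realType} {n : nat} u v (f g : 'cV[R[i]]_n -> 'cV[R[i]]_n -> R[i]) :
  herm f -> herm g -> herm (lc u v f g).
Proof.
move=> h1 h2 x y; rewrite /lc h1 h2; move: (f x y) (g x y) => [a b] [c d]; apply: cext => /=; ring.
Qed.

Lemma Re_hf {R : realType} {n : nat} (f : 'cV[R[i]]_n -> 'cV[R[i]]_n -> R[i]) x :
  complex.Re (hf f x x) = 2 * complex.Re (f x x).
Proof. by rewrite /hf; case: (f x x) => a b /=; ring. Qed.
Lemma Re_kf {R : realType} {n : nat} (f : 'cV[R[i]]_n -> 'cV[R[i]]_n -> R[i]) x :
  complex.Re (kf f x x) = 2 * complex.Im (f x x).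
Proof. by rewrite /kf; case: (f x x) => a b /=; ring. Qed.
Lemma Re_lc {R : realType} {n : nat} u v (f g : 'cV[R[i]]_n -> 'cV[R[i]]_n -> R[i]) x :
  complex.Re (lc u v f g x x) = u * complex.Re (f x x) + v * complex.Re (g x x).
Proof. by rewrite /lc; case: (f x x); case: (g x x) => a b c d /=; ring. Qed.

Lemma hk_id {R : realType} {n : nat} (f : 'cV[R[i]]_n -> 'cV[R[i]]_n -> R[i]) x y :
  hf f x y + 'i%C * kf f x y = 2 * f x y.
Proof.
rewrite /hf /kf; move: (f x y) (f y x) => [a b] [c d].
by apply: cext => /=; ring.
Qed.

Lemma pq_id {R : realType} {n : nat} (t : R) (f : 'cV[R[i]]_n -> 'cV[R[i]]_n -> R[i]) x y :
  ((4 * t)%:C)%C * f x y =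
  (1 + 'i%C * (t%:C)%C) * lc t 1 (hf f) (kf f) x y
  + (1 - 'i%C * (t%:C)%C) * lc t (-1) (hf f) (kf f) x y.
Proof.
rewrite /lc /hf /kf; move: (f x y) (f y x) => [a b] [c d].
by apply: cext => /=; ring.
Qed.

Lemma amgm_sum {R : realType} (p q P1 P2 Q1 Q2 : R) :
  0 <= p -> 0 <= q -> 0 <= P1 -> 0 <= P2 -> 0 <= Q1 -> 0 <= Q2 ->
  p ^+ 2 <= P1 * P2 -> q ^+ 2 <= Q1 * Q2 ->
  (p + q) ^+ 2 <= (P1 + Q1) * (P2 + Q2).
Proof.
move=> p0 q0 P10 P20 Q10 Q20 hp hq.
have h1 : (p * q) ^+ 2 <= ((P1 * Q2 + Q1 * P2) / 2) ^+ 2.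
  have e : (p * q) ^+ 2 <= (P1 * P2) * (Q1 * Q2).
    rewrite exprMn; apply: ler_pM => //; apply: sqr_ge0.
  apply: le_trans e _.
  have := sqr_ge0 (P1 * Q2 - Q1 * P2); nra.
have h2 : p * q <= (P1 * Q2 + Q1 * P2) / 2.
  apply: sq_le => //; apply: divr_ge0 => //; apply: addr_ge0; apply: mulr_ge0 => //.
nra.
Qed.

Lemma cmod2 {R : realType} : cmod (2 : R[i]) = 2.
Proof.
have -> : (2 : R[i]) = (((2 : R))%:C)%C by rewrite rmorph_nat.
by rewrite cmod_real ger0_norm.
Qed.

Lemma cmod_1it {R : realType} (t : R) :
  cmod (1 + 'i%C * (t%:C)%C) = Num.sqrt (1 + t ^+ 2) /\
  cmod (1 - 'i%C * (t%:C)%C) = Num.sqrt (1 + t ^+ 2).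
Proof. by split; rewrite /cmod /=; congr Num.sqrt; ring. Qed.

Lemma sector_bound {R : realType} {n : nat} (f : 'cV[R[i]]_n -> 'cV[R[i]]_n -> R[i]) (t : R) :
  lin1 f -> lin2 f -> 0 <= t ->
  (forall u, 0 <= complex.Re (f u u) /\ `|complex.Im (f u u)| <= t * complex.Re (f u u)) ->
  forall x y, cmod (f x y) ^+ 2 <= (1 + t ^+ 2) * complex.Re (f x x) * complex.Re (f y y).
Proof.
move=> l1 l2 t0 hs x y.
have lh1 := hf_lin1 f l1 l2; have lh2 := hf_lin2 f l1 l2; have hh := hf_herm f.
have lk1 := kf_lin1 f l1 l2; have lk2 := kf_lin2 f l1 l2; have hk := kf_herm f.
have psdh : psd (hf f).
  by move=> u; rewrite Re_hf; case: (hs u) => h0 _; apply: mulr_ge0.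
have psdP : psd (lc t 1 (hf f) (kf f)).
  move=> u; rewrite Re_lc Re_hf Re_kf; case: (hs u) => h0.
  rewrite ler_norml => /andP[h1 h2]; nra.
have psdQ : psd (lc t (-1) (hf f) (kf f)).
  move=> u; rewrite Re_lc Re_hf Re_kf; case: (hs u) => h0.
  rewrite ler_norml => /andP[h1 h2]; nra.
have CSP := @CS _ _ _ (lc_lin1 t 1 _ _ lh1 lk1) (lc_lin2 t 1 _ _ lh2 lk2) (lc_herm t 1 _ _ hh hk) psdP x y.
have CSQ := @CS _ _ _ (lc_lin1 t (-1) _ _ lh1 lk1) (lc_lin2 t (-1) _ _ lh2 lk2) (lc_herm t (-1) _ _ hh hk) psdQ x y.
have CSH := @CS _ _ _ lh1 lh2 hh psdh x y.
rewrite !Re_lc !Re_hf !Re_kf in CSP CSQ.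
rewrite !Re_hf in CSH.
have [ha1 hb1] := hs x; have [ha2 hb2] := hs y.
have F0 := cmod_ge0 (f x y).
have [tz|tp] := eqVneq t 0.
  move: hb1 hb2 CSP; rewrite tz !mul0r !normr_le0 => /eqP -> /eqP ->.
  rewrite !mulr0 !addr0 mulr0 => CSP.
  have Pz : cmod (lc 0 1 (hf f) (kf f) x y) = 0.
    apply: sq_eq => //; [apply: cmod_ge0 | by rewrite expr0n /=; apply/le_anti/andP; split => //; apply: sqr_ge0].
  have kz : kf f x y = 0.
    by move: (cmod_eq0 _ Pz); rewrite /lc rmorph0 rmorph1 mul0r mul1r add0r.
  have := hk_id f x y; rewrite kz mulr0 addr0 => e.
  rewrite e cmodM cmod2 in CSH.
  rewrite expr0n /= addr0 mul1r; nra.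
have tp' : 0 < t by rewrite lt_def tp t0.
have e := pq_id t f x y.
set p := cmod (lc t 1 (hf f) (kf f) x y) in CSP.
set q := cmod (lc t (-1) (hf f) (kf f) x y) in CSQ.
have p0 : 0 <= p := cmod_ge0 _.
have q0 : 0 <= q := cmod_ge0 _.
have H1 : 4 * t * cmod (f x y) <= Num.sqrt (1 + t ^+ 2) * (p + q).
  have -> : 4 * t * cmod (f x y) = cmod ((((4 * t)%:C)%C) * f x y).
    by rewrite cmodM cmod_real ger0_norm // mulr_ge0.
  rewrite e; apply: le_trans (cmodD _ _) _.
  rewrite !cmodM; have [-> ->] := cmod_1it t; rewrite mulrDr //.
have H2 : (p + q) ^+ 2 <= (4 * t * complex.Re (f x x)) * (4 * t * complex.Re (f y y)).
  have -> : 4 * t * complex.Re (f x x) =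
    (t * (2 * complex.Re (f x x)) + 1 * (2 * complex.Im (f x x))) +
    (t * (2 * complex.Re (f x x)) + -1 * (2 * complex.Im (f x x))) by ring.
  have -> : 4 * t * complex.Re (f y y) =
    (t * (2 * complex.Re (f y y)) + 1 * (2 * complex.Im (f y y))) +
    (t * (2 * complex.Re (f y y)) + -1 * (2 * complex.Im (f y y))) by ring.
  apply: amgm_sum => //.
  - by have := psdP x; rewrite Re_lc Re_hf Re_kf.
  - by have := psdP y; rewrite Re_lc Re_hf Re_kf.
  - by have := psdQ x; rewrite Re_lc Re_hf Re_kf.
  - by have := psdQ y; rewrite Re_lc Re_hf Re_kf.
have s2 : Num.sqrt (1 + t ^+ 2) ^+ 2 = 1 + t ^+ 2.
  by rewrite sqr_sqrtr // addr_ge0 // sqr_ge0.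
have s0 := sqrtr_ge0 (1 + t ^+ 2).
have H3 : (4 * t * cmod (f x y)) ^+ 2 <= (1 + t ^+ 2) * (p + q) ^+ 2.
  rewrite -s2 -exprMn; apply: lerXn2r => //; rewrite ?nnegrE ?mulr_ge0 ?addr_ge0 //.
have H4 : (4 * t * cmod (f x y)) ^+ 2 <=
   (1 + t ^+ 2) * ((4 * t * complex.Re (f x x)) * (4 * t * complex.Re (f y y))).
  apply: le_trans H3 _; apply: ler_wpM2l => //; apply: addr_ge0 => //; apply: sqr_ge0.
have tt : 0 < (4 * t) ^+ 2 by apply: exprn_gt0; rewrite mulr_gt0.
rewrite -(ler_pM2l tt).
have -> : (4 * t) ^+ 2 * cmod (f x y) ^+ 2 = (4 * t * cmod (f x y)) ^+ 2 by ring.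
apply: (le_trans H4).
rewrite le_eqVlt; apply/orP; left; apply/eqP; ring.
Qed.

Lemma a_lin1 {R : realType} {n : nat} (A : 'M[R[i]]_n) :
  lin1 (fun x y => inner (A *m x) y).
Proof. by move=> x y z c; rewrite mulmxDr -scalemxAr inner_lin1. Qed.

Lemma a_lin2 {R : realType} {n : nat} (A : 'M[R[i]]_n) :
  lin2 (fun x y => inner (A *m x) y).
Proof. by move=> x y z c; rewrite inner_lin2. Qed.

Lemma form_scale {R : realType} {n : nat} (f : 'cV[R[i]]_n -> 'cV[R[i]]_n -> R[i]) (r : R) v :
  lin1 f -> lin2 f -> f ((r%:C)%C *: v) ((r%:C)%C *: v) = (((r ^+ 2)%:C)%C) * f v v.
Proof.
move=> l1 l2.
have f0 : forall z, f 0 z = 0.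
  move=> z; have := l1 v v z (-1); rewrite scaleN1r subrr => ->; ring.
have f0' : forall z, f z 0 = 0.
  move=> z; have := l2 v v z (-1); rewrite scaleN1r subrr => ->.
  rewrite rmorphN rmorph1; ring.
have := l1 0 v ((r%:C)%C *: v) (r%:C)%C; rewrite add0r => ->.
have := l2 0 v v (r%:C)%C; rewrite add0r => ->.
rewrite f0 f0' conjc_real rmorphXn /=; ring.
Qed.

Lemma Re_realM {R : realType} (s : R) (z : R[i]) :
  complex.Re (((s%:C)%C) * z) = s * complex.Re z /\
  complex.Im (((s%:C)%C) * z) = s * complex.Im z.
Proof. by case: z => a b /=; split; ring. Qed.

Lemma unit_decomp {R : realType} {n : nat} (u : 'cV[R[i]]_n) :
  vnorm u != 0 -> exists v, vnorm v = 1 /\ u = (((vnorm u)%:C)%C) *: v.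
Proof.
move=> ne; have vp : 0 < vnorm u by rewrite lt_def ne vnorm_ge0.
exists ((((vnorm u)^-1)%:C)%C *: u); split.
  by rewrite vnormZ cmod_real ger0_norm ?invr_ge0 ?vnorm_ge0 // mulVf.
by rewrite scalerA -rmorphM /= divff // scale1r.
Qed.

Lemma sector_all {R : realType} {n : nat} (A : 'M[R[i]]_n) (t : R) :
  (forall x, vnorm x = 1 -> 0 < complex.Re (inner (A *m x) x) /\
     `|complex.Im (inner (A *m x) x)| <= t * complex.Re (inner (A *m x) x)) ->
  forall u, 0 <= complex.Re (inner (A *m u) u) /\
     `|complex.Im (inner (A *m u) u)| <= t * complex.Re (inner (A *m u) u).
Proof.
move=> h u; have [e|ne] := eqVneq (vnorm u) 0.
  rewrite (vnorm_eq0 u e) mulmx0 inner_self vnorm0 expr0n /=.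
  by rewrite normr0 mulr0.
have [v [hv ->]] := unit_decomp u ne.
have := form_scale _ (vnorm u) v (a_lin1 A) (a_lin2 A); rewrite /= => ->.
have [e1 e2] := Re_realM (vnorm u ^+ 2) (inner (A *m v) v).
rewrite e1 e2; have [h1 h2] := h v hv.
have s0 : 0 <= vnorm u ^+ 2 by apply: sqr_ge0.
split; first by apply: mulr_ge0 => //; apply: ltW.
rewrite normrM ger0_norm // mulrCA; exact: ler_wpM2l.
Qed.

Lemma Re_bound {R : realType} {n : nat} (A : 'M[R[i]]_n) (m : R) :
  0 <= m -> (forall x, vnorm x = 1 -> complex.Re (inner (A *m x) x) <= m) ->
  forall u, complex.Re (inner (A *m u) u) <= m * vnorm u ^+ 2.
Proof.
move=> m0 h u; have [e|ne] := eqVneq (vnorm u) 0.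
  by rewrite (vnorm_eq0 u e) mulmx0 inner_self vnorm0 expr0n /= mulr0.
have [v [hv ->]] := unit_decomp u ne.
have := form_scale _ (vnorm u) v (a_lin1 A) (a_lin2 A); rewrite /= => ->.
have [e1 _] := Re_realM (vnorm u ^+ 2) (inner (A *m v) v).
rewrite e1 vnormZ hv mulr1 cmod_real ger0_norm ?vnorm_ge0 // mulrC.
by apply: ler_wpM2r; [apply: sqr_ge0 | apply: h].
Qed.

Lemma opnorm_sector {R : realType} {n : nat} (A : 'M[R[i]]_n) (t W c : R) :
  0 <= t -> 0 <= W -> 0 < c ->
  (forall x, vnorm x = 1 -> 0 < complex.Re (inner (A *m x) x) /\
     `|complex.Im (inner (A *m x) x)| <= t * complex.Re (inner (A *m x) x)) ->
  (forall u, vnorm u = 1 -> c * cmod (inner (A *m u) u) <= W) ->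
  c * opnorm A <= Num.sqrt (1 + t ^+ 2) * W.
Proof.
move=> t0 W0 c0 hsec hW.
set m := c^-1 * W.
have m0 : 0 <= m by apply: mulr_ge0 => //; rewrite invr_ge0 ltW.
have hm : forall x, vnorm x = 1 -> complex.Re (inner (A *m x) x) <= m.
  move=> x hx; apply: le_trans (Re_le_cmod _) _; rewrite ler_pdivlMl //; exact: hW.
have hb := Re_bound A m m0 hm.
have hs := sector_all A t hsec.
have sb := sector_bound _ t (a_lin1 A) (a_lin2 A) t0 hs.
set s := Num.sqrt (1 + t ^+ 2).
have s0 : 0 <= s by apply: sqrtr_ge0.
have s2 : s ^+ 2 = 1 + t ^+ 2 by rewrite sqr_sqrtr // addr_ge0 // sqr_ge0.
have key : forall x, vnorm x = 1 -> vnorm (A *m x) <= s * m.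
  move=> x hx; set y := A *m x.
  have := sb x y; rewrite /= inner_self cmod_real ger0_norm ?sqr_ge0 //.
  have h1 := hm x hx; have h2 := hb y.
  have [Rx0 _] := hs x; have [Ry0 _] := hs y.
  set V2 := vnorm y ^+ 2 => h3.
  have V20 : 0 <= V2 by apply: sqr_ge0.
  have T0 : 0 <= 1 + t ^+ 2 by rewrite addr_ge0 // sqr_ge0.
  have h4 : V2 ^+ 2 <= (1 + t ^+ 2) * m ^+ 2 * V2.
    apply: (le_trans h3).
    have -> : (1 + t ^+ 2) * m ^+ 2 * V2 = (1 + t ^+ 2) * m * (m * V2) by ring.
    apply: ler_pM => //; first by apply: mulr_ge0.
    by apply: ler_wpM2l.
  have h5 : V2 <= (1 + t ^+ 2) * m ^+ 2.
    have K0 : 0 <= (1 + t ^+ 2) * m ^+ 2 by apply: mulr_ge0 => //; apply: sqr_ge0.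
    nra.
  apply: sq_le; first by apply: mulr_ge0.
  by rewrite exprMn s2.
have hop : opnorm A <= s * m.
  apply: sup_le'; first by apply: mulr_ge0.
  by move=> r [x hx <-]; apply: key.
have -> : s * W = c * (s * m).
  by rewrite /m; field; rewrite gt_eqF.
by apply: ler_wpM2l => //; apply: ltW.
Qed.

Lemma innerZl {R : realType} {n : nat} (a : R[i]) (x w : 'cV[R[i]]_n) :
  inner (a *: x) w = a * inner x w.
Proof. rewrite /inner mulr_sumr; apply: eq_bigr => i _; rewrite !mxE; ring. Qed.
Lemma innerZr {R : realType} {n : nat} (a : R[i]) (x w : 'cV[R[i]]_n) :
  inner w (a *: x) = (a^*)%C * inner w x.
Proof.
rewrite /inner mulr_sumr; apply: eq_bigr => i _; rewrite !mxE rmorphM /=; ring.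
Qed.
Lemma innerDl {R : realType} {n : nat} (x y w : 'cV[R[i]]_n) :
  inner (x + y) w = inner x w + inner y w.
Proof. by rewrite /inner -big_split; apply: eq_bigr => i _; rewrite !mxE mulrDl. Qed.
Lemma innerDr {R : realType} {n : nat} (x y w : 'cV[R[i]]_n) :
  inner w (x + y) = inner w x + inner w y.
Proof.
by rewrite /inner -big_split; apply: eq_bigr => i _; rewrite !mxE rmorphD mulrDr.
Qed.

Lemma choose_sign {R : realType} (w1 w2 : R[i]) :
  exists e : R, e ^+ 2 = 1 /\ cmod w1 <= cmod (w1 + ((e%:C)%C) * w2).
Proof.
case: w1 w2 => a b [c d].
have [h|h] := lerP 0 (a * c + b * d).
  exists 1; split; first by rewrite expr1n.
  apply: sq_le; first by apply: cmod_ge0.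
  rewrite !cmod_sq /=; nra.
exists (-1); split; first by rewrite sqrrN expr1n.
apply: sq_le; first by apply: cmod_ge0.
rewrite !cmod_sq /=; nra.
Qed.

Lemma inner_two {R : realType} {n : nat} (u w : 'cV[R[i]]_n) (i0 i1 : 'I_n) :
  i1 != i0 -> (forall i, i != i0 -> i != i1 -> w i 0 = 0) ->
  inner u w = u i0 0 * (w i0 0)^*%C + u i1 0 * (w i1 0)^*%C.
Proof.
move=> ne hw; rewrite /inner (bigD1 i0) //= (bigD1 i1) //=.
rewrite big1 ?addr0 // => i /andP [h0 h1].
by rewrite hw // mulrC (@rmorph0 _ _ (@conjc R)) mul0r.
Qed.

Lemma exists_orth {R : realType} {m : nat} (u : 'cV[R[i]]_m.+2) :
  exists z : 'cV[R[i]]_m.+2, vnorm z = 1 /\ inner u z = 0.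
Proof.
set i0 : 'I_m.+2 := ord0.
set i1 : 'I_m.+2 := lift ord0 ord0.
have ne : i1 != i0 by [].
set z0 : 'cV[R[i]]_m.+2 :=
  \col_i (if i == i0 then (u i1 0)^*%C else if i == i1 then - (u i0 0)^*%C else 0).
have hz0 : inner u z0 = 0.
  rewrite (inner_two u z0 i0 i1 ne); last first.
    by move=> i h0 h1; rewrite mxE (negbTE h0) (negbTE h1).
  rewrite !mxE eqxx (negbTE ne) eqxx rmorphN /= !conjcK; ring.
have [e|nz] := eqVneq (vnorm z0) 0.
  have z00 := vnorm_eq0 z0 e.
  have u1 : u i1 0 = 0.
    have := congr1 (fun M : 'cV[R[i]]_m.+2 => M i0 0) z00.
    rewrite /= !mxE eqxx => /eqP; rewrite conjc_eq0 => /eqP //.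
  have u0 : u i0 0 = 0.
    have := congr1 (fun M : 'cV[R[i]]_m.+2 => M i1 0) z00.
    rewrite /= !mxE eqxx (negbTE ne) => /eqP; rewrite oppr_eq0 conjc_eq0 => /eqP //.
  set e0 : 'cV[R[i]]_m.+2 := \col_i (if i == i0 then 1 else 0).
  have he0 : forall i, i != i0 -> i != i1 -> e0 i 0 = 0.
    by move=> i h0 h1; rewrite mxE (negbTE h0).
  exists e0; split.
    apply: sq_eq; rewrite ?vnorm_ge0 // vnorm_sq (inner_two e0 e0 i0 i1 ne he0).
    rewrite !mxE eqxx (negbTE ne) conjc1 mulr1 (@rmorph0 _ _ (@conjc R)) mulr0 addr0.
    by rewrite expr1n.
  rewrite (inner_two u e0 i0 i1 ne he0) u0 u1; ring.
exists ((((vnorm z0)^-1)%:C)%C *: z0); split.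
  have vp : 0 < vnorm z0 by rewrite lt_def nz vnorm_ge0.
  by rewrite vnormZ cmod_real ger0_norm ?invr_ge0 ?vnorm_ge0 // mulVf.
by rewrite innerZr hz0 mulr0.
Qed.

Lemma inner_0r {R : realType} {n : nat} (u : 'cV[R[i]]_n) : inner u 0 = 0.
Proof.
by rewrite /inner big1 // => i _; rewrite mxE (@rmorph0 _ _ (@conjc R)) mulr0.
Qed.

Lemma q_lower {R : realType} {n : nat} (A : 'M[R[i]]_n) (q : R[i]) (u : 'cV[R[i]]_n) :
  (exists z, vnorm z = 1 /\ inner u z = 0) \/ cmod q = 1 -> cmod q <= 1 ->
  vnorm u = 1 -> cmod q * cmod (inner (A *m u) u) <= wq q A.
Proof.
move=> hz q1 hu.
have [z [hz1 hz2]] : exists z, (1 - cmod q ^+ 2) * vnorm z ^+ 2 = 1 - cmod q ^+ 2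
    /\ inner u z = 0.
  case: hz => [[z [h1 h2]]|h]; first by exists z; rewrite h1 expr1n mulr1.
  by exists 0; rewrite h expr1n subrr mul0r inner_0r.
have cq0 := cmod_ge0 q.
set s := Num.sqrt (1 - cmod q ^+ 2).
have s2 : s ^+ 2 = 1 - cmod q ^+ 2.
  by rewrite sqr_sqrtr // subr_ge0 expr_le1.
have [e [e2 he]] := choose_sign (q * inner (A *m u) u) ((s%:C)%C * inner (A *m u) z).
set y := (q^*)%C *: u + (((s * e)%:C)%C) *: z.
have huu : inner u u = 1 by rewrite inner_self hu expr1n.
have hzu : inner z u = 0 by rewrite inner_herm hz2 (@rmorph0 _ _ (@conjc R)).
have hy : inner u y = q.
  rewrite /y innerDr !innerZr hz2 huu conjcK mulr1 mulr0 addr0 //.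
have hyy : vnorm y = 1.
  apply: sq_eq; rewrite ?vnorm_ge0 // vnorm_sq /y !innerDl !innerDr !innerZl !innerZr.
  rewrite huu hz2 hzu (inner_self z) !mulr0 !addr0 !add0r mulr1.
  have gen : forall w : R[i], complex.Re (w * (w^*)%C +
        ((s * e)%:C)%C * ((((s * e)%:C)%C)^*%C * (((vnorm z ^+ 2)%:C)%C)))
      = cmod w ^+ 2 + s ^+ 2 * e ^+ 2 * vnorm z ^+ 2.
    by case=> a b; rewrite cmod_sq /=; ring.
  rewrite gen.
  rewrite cmodJ e2 mulr1 s2 hz1 expr1n; ring.
apply: le_trans _ (wq_ub q A u y hu hyy hy).
have -> : inner (A *m u) y = q * inner (A *m u) u + ((e%:C)%C) * ((s%:C)%C * inner (A *m u) z).
  rewrite /y innerDr !innerZr conjcK (conjc_real (s * e)) rmorphM /=; ring.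
by rewrite -cmodM.
Qed.

Lemma wq_dim0 {R : realType} (q : R[i]) (X : 'M[R[i]]_0) : wq q X = 0.
Proof.
rewrite /wq; set S := [set r : R | _].
have -> : S = set0; last by rewrite sup0.
apply/seteqP; split => // r [x [y [hx _ _ _]]].
have := vnorm_sq x; rewrite hx Re_inner big_ord0 expr1n => /eqP.
by rewrite oner_eq0.
Qed.

Lemma wq_dim1 {R : realType} (q : R[i]) (X : 'M[R[i]]_1) : cmod q < 1 -> wq q X = 0.
Proof.
move=> hq; rewrite /wq; set S := [set r : R | _].
have -> : S = set0; last by rewrite sup0.
apply/seteqP; split => // r [x [y [hx hy hxy _]]].
have ex := vnorm_sq x; have ey := vnorm_sq y.
rewrite hx Re_inner big_ord1 expr1n in ex.
rewrite hy Re_inner big_ord1 expr1n in ey.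
have cx : cmod (x 0 0) = 1 by apply: sq_eq; rewrite ?cmod_ge0 // -ex expr1n.
have cy : cmod (y 0 0) = 1 by apply: sq_eq; rewrite ?cmod_ge0 // -ey expr1n.
move: hxy; rewrite /inner big_ord1 => e.
have : cmod q = 1 by rewrite -e cmodM cmodJ cx cy mulr1.
by move=> h; move: hq; rewrite h ltxx.
Qed.

Lemma chain3 {R : realType} {n : nat} (P Q S : 'M[R[i]]_n) (x : 'cV[R[i]]_n) :
  vnorm x = 1 -> vnorm (P *m (Q *m (S *m x))) <= opnorm P * opnorm Q * opnorm S.
Proof.
move=> hx.
apply: le_trans (opnorm_le _ _) _; rewrite -!mulrA; apply: ler_wpM2l; first exact: opnorm_ge0.
apply: le_trans (opnorm_le _ _) _; apply: ler_wpM2l; first exact: opnorm_ge0.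
exact: opnorm_ub.
Qed.

Lemma max_facts {R : realType} (a b : R) : 0 <= a ->
  0 <= Num.max a b /\ a <= Num.max a b /\ b <= Num.max a b.
Proof. by move=> a0; rewrite !le_max !lexx a0 ?orbT. Qed.

Lemma arith_sum {R : realType} (a b c d M u v : R) : 0 <= a -> 0 <= b ->
  c <= M -> d <= M -> u <= a * c * b -> v <= b * d * a -> u + v <= 2 * M * a * b.
Proof.
move=> a0 b0 hc hd hu hv.
have ab : 0 <= a * b by apply: mulr_ge0.
have e1 : a * c * b <= M * (a * b).
  have -> : a * c * b = c * (a * b) by ring.
  by apply: ler_wpM2r.
have e2 : b * d * a <= M * (a * b).
  have -> : b * d * a = d * (a * b) by ring.
  by apply: ler_wpM2r.
have -> : 2 * M * a * b = M * (a * b) + M * (a * b) by ring.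
apply: lerD; [exact: le_trans hu e1 | exact: le_trans hv e2].
Qed.

Lemma wq_X {R : realType} {n : nat} (q : R[i]) (B C D A : 'M[R[i]]_n) (sg : bool) :
  wq q (A *m C *m B + (if sg then 1 else -1) *: (B *m D *m A))
   <= 2 * Num.max (opnorm C) (opnorm D) * opnorm A * opnorm B.
Proof.
have := max_facts (opnorm C) (opnorm D) (opnorm_ge0 C).
move: (Num.max (opnorm C) (opnorm D)) => M [M0 [hC hD]].
have hA0 := opnorm_ge0 A; have hB0 := opnorm_ge0 B.
have b0 : 0 <= 2 * M * opnorm A * opnorm B.
  apply: mulr_ge0; last exact: hB0.
  apply: mulr_ge0; last exact: hA0.
  apply: mulr_ge0; [exact: ler0n | exact: M0].
apply: (wq_le q _ _ b0).
move=> x y hx hy _.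
apply: le_trans (CS_inner _ _) _; rewrite hy mulr1.
rewrite mulmxDl; apply: le_trans (vnormD _ _) _.
have -> : vnorm (((if sg then 1 else -1) *: (B *m D *m A)) *m x) = vnorm (B *m D *m A *m x).
  by case: sg; rewrite ?scale1r // scaleN1r mulNmx vnormN.
rewrite -!mulmxA.
have h1 := chain3 A C B x hx; have h2 := chain3 B D A x hx.
exact: (arith_sum _ _ _ _ _ _ _ hA0 hB0 hC hD h1 h2).
Qed.

Lemma final_arith {R : realType} (cq W2 W M a b s : R) : 0 <= cq -> 0 <= M -> 0 <= b ->
  W2 <= 2 * M * a * b -> cq * a <= s * W -> cq * W2 <= 2 * s * M * W * b.
Proof.
move=> cq0 M0 b0 h1 h2.
have Mb : 0 <= 2 * M * b by apply: mulr_ge0 => //; apply: mulr_ge0.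
apply: le_trans (ler_wpM2l cq0 h1) _.
have -> : cq * (2 * M * a * b) = (2 * M * b) * (cq * a) by ring.
have -> : 2 * s * M * W * b = (2 * M * b) * (s * W) by ring.
by apply: ler_wpM2l.
Qed.

Lemma main_gen {R : realType} {n : nat} (alpha : R) (B C D A : 'M[R[i]]_n) (q : R[i]) :
  0 <= alpha < pi / 2 ->
  A \in @Pi_s R n alpha ->
  0 < cmod q <= 1 ->
  (forall u, vnorm u = 1 -> cmod q * cmod (inner (A *m u) u) <= wq q A) ->
  cmod q * wq q (A *m C *m B + B *m D *m A)
    <= 2 * (cos alpha)^-1 * Num.max (opnorm C) (opnorm D) * wq q A * opnorm B /\
  cmod q * wq q (A *m C *m B - B *m D *m A)
    <= 2 * (cos alpha)^-1 * Num.max (opnorm C) (opnorm D) * wq q A * opnorm B.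
Proof.
move=> /andP[a0 a1] /set_mem hA /andP[q0 q1] hq.
have pi0 : (0 : R) < pi := pi_gt0 R.
have c0 : 0 < cos alpha.
  by apply: cos_gt0_pihalf; apply/andP; split; lra.
have t0 : 0 <= tan alpha.
  rewrite /tan; apply: divr_ge0; last exact: ltW.
  by apply: sin_ge0_pi; apply/andP; split; lra.
have hs : Num.sqrt (1 + tan alpha ^+ 2) = (cos alpha)^-1.
  rewrite -cos2_tan2 ?gt_eqF // -exprVn sqrtr_sqr ger0_norm //.
  by rewrite invr_ge0 ltW.
have hsec : forall x, vnorm x = 1 -> 0 < complex.Re (inner (A *m x) x) /\
     `|complex.Im (inner (A *m x) x)| <= tan alpha * complex.Re (inner (A *m x) x).
  by move=> x hx; apply: (hA (inner (A *m x) x)); exists x.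
have KA := opnorm_sector A (tan alpha) (wq q A) (cmod q) t0 (wq_ge0 q A) q0 hsec hq.
rewrite hs in KA.
have := max_facts (opnorm C) (opnorm D) (opnorm_ge0 C).
move=> [M0 _].
have B0 := opnorm_ge0 B.
have cq0 := cmod_ge0 q.
split.
  have := wq_X q B C D A true; rewrite scale1r => h.
  exact: (final_arith _ _ _ _ _ _ _ cq0 M0 B0 h KA).
have := wq_X q B C D A false; rewrite scaleN1r => h.
exact: (final_arith _ _ _ _ _ _ _ cq0 M0 B0 h KA).
Qed.

Theorem theorem2p18 (R : realType) (n : nat) (alpha : R)
    (B C D A : 'M[R[i]]_n) (q : R[i]) :
  0 <= alpha < pi / 2 ->
  A \in @Pi_s R n alpha ->
  0 < cmod q <= 1 ->
  cmod q * wq q (A *m C *m B + B *m D *m A)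
    <= 2 * (cos alpha)^-1 * Num.max (opnorm C) (opnorm D) * wq q A * opnorm B /\
  cmod q * wq q (A *m C *m B - B *m D *m A)
    <= 2 * (cos alpha)^-1 * Num.max (opnorm C) (opnorm D) * wq q A * opnorm B.
Proof.
move=> ha hA hq.
have z0 : forall (x y : R), x * 0 <= y * 0 * opnorm B.
  by move=> x y; rewrite !mulr0 mul0r.
move: hq; case: n B C D A hA z0 => [|[|m]] B C D A hA z0 hq.
- by rewrite !wq_dim0; split; apply: z0.
- have [e|ne] := eqVneq (cmod q) 1.
    apply: main_gen => // u hu; apply: q_lower => //; first by right.
    by case/andP: hq.
  have lt1 : cmod q < 1 by case/andP: hq => _ h; rewrite lt_neqAle ne h.
  by rewrite !wq_dim1 //; split; apply: z0.
- apply: main_gen => // u hu; apply: q_lower => //; first by left; apply: exists_orth.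
  by case/andP: hq.
Qed.
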